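(* The class of multi-modal antitone algebras is closed under canonical extensions: if $M=\langle A,\{\Box_b\}_{b\in B}\rangle$ is a multi-modal antitone algebra, then $\mathrm{Em}(M)=\langle\mathcal{P}(\mathrm{Ul}(A)),\{[Q_b]\}_{b\in B}\rangle$, with the operator $[Q_b]$ indexed by $\varphi(b)\in\varphi[B]$ (a Boolean subalgebra of $\mathcal{P}(\mathrm{Ul}(A))$), is a multi-modal antitone algebra.
   Context: A multi-modal antitone algebra is $\langle A,\{\Box_b\}_{b\in B}\rangle$ where $A$ is a Boolean algebra, $B$ is a Boolean subalgebra of $A$, and each $\Box_b\colon A\to A$ satisfies $\Box_b(1)=1$, $\Box_b(a\wedge c)=\Box_b(a)\wedge\Box_b(c)$, and $\Box_{b_1\vee b_2}(a)\le\Box_{b_1}(a)\wedge\Box_{b_2}(a)$ for all $a,c\in A$, $b,b_1,b_2\in B$. $\mathrm{Ul}(A)$ is the set of ultrafilters of $A$, $\varphi(a)=\{u\in\mathrm{Ul}(A):a\in u\}$. For $b\in B$ and $u,v\in\mathrm{Ul}(A)$: $Q_b(u,v)$ iff $\Box_b^{-1}[u]=\{a\in A:\Box_b(a)\in u\}\subseteq v$; $Q_b(u)=\{v:Q_b(u,v)\}$; and for $X\subseteq\mathrm{Ul}(A)$, $[Q_b](X)=\{u: Q_b(u)\subseteq X\}$. *)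

(* Defs.v *)
From HB Require Import structures.
From mathcomp Require Import all_boot all_order.
From mathcomp Require Import classical_sets.
Set Implicit Arguments. Unset Strict Implicit. Unset Printing Implicit Defensive.
Import Order.TTheory.
Local Open Scope classical_set_scope.

(* Boolean algebras are MathComp's complemented distributive lattices
   with top and bottom (ctbDistrLatticeType).  For any type T, the
   powerset [set T] is canonically such a lattice (classical_sets). *)

Section Defs.
Context {d : Order.disp_t} {A : ctbDistrLatticeType d}.

Definition boolean_subalgebra (B : set A) : Prop :=
  B \bot%O /\ B \top%O /\
  (forall x y, B x -> B y -> B (Order.meet x y)) /\
  (forall x y, B x -> B y -> B (Order.join x y)) /\
  (forall x, B x -> B (Order.compl x)).

(* multi-modal antitone algebra <A, {box b}_{b in B}>; box is only
   constrained on indices b in B *)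
Definition multimodal_antitone (B : set A) (box : A -> A -> A) : Prop :=
  boolean_subalgebra B /\
  (forall b, B b -> box b \top%O = \top%O) /\
  (forall b a c, B b -> box b (Order.meet a c) = Order.meet (box b a) (box b c)) /\
  (forall b1 b2 a, B b1 -> B b2 ->
     (box (Order.join b1 b2) a <= Order.meet (box b1 a) (box b2 a))%O).

Definition is_filter (F : set A) : Prop :=
  F \top%O /\
  (forall a c, F a -> F c -> F (Order.meet a c)) /\
  (forall a c, F a -> (a <= c)%O -> F c).

Definition proper_filter (F : set A) : Prop := is_filter F /\ ~ F \bot%O.

Definition ultrafilter (F : set A) : Prop :=
  proper_filter F /\
  (forall G : set A, proper_filter G -> F `<=` G -> G = F).

End Defs.

Definition Ul {d} (A : ctbDistrLatticeType d) : Type := {u : set A | ultrafilter u}.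

Definition phi {d} {A : ctbDistrLatticeType d} (a : A) : set (Ul A) :=
  [set u | proj1_sig u a].

Definition Qrel {d} {A : ctbDistrLatticeType d} (box : A -> A -> A) (b : A)
  (u v : Ul A) : Prop :=
  [set a | proj1_sig u (box b a)] `<=` proj1_sig v.

Definition boxQ {d} {A : ctbDistrLatticeType d} (box : A -> A -> A) (b : A)
  (X : set (Ul A)) : set (Ul A) :=
  [set u | forall v, Qrel box b u v -> X v].

(* Main.v *)
Require Import Defs.
From mathcomp Require Import all_boot all_order.
From mathcomp Require Import boolp classical_sets.
Set Implicit Arguments. Unset Strict Implicit. Unset Printing Implicit Defensive.
Import Order.Theory.
Local Open Scope classical_set_scope.

Section Help.
Context {d : Order.disp_t} {A : ctbDistrLatticeType d}.

Lemma uf_up (u : set A) a c : ultrafilter u -> u a -> (a <= c)%O -> u c.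
Proof. by move=> [[[_ [_ H]] _] _]; apply: H. Qed.

Lemma uf_meet (u : set A) a c : ultrafilter u -> u a -> u c -> u (Order.meet a c).
Proof. by move=> [[[_ [H _]] _] _]; apply: H. Qed.

Lemma uf_top (u : set A) : ultrafilter u -> u \top%O.
Proof. by move=> [[[H _] _] _]. Qed.

Lemma uf_bot (u : set A) : ultrafilter u -> ~ u \bot%O.
Proof. by move=> [[_ H] _]. Qed.

Lemma disj_le (f a : A) : Order.meet f a = \bot%O -> (f <= Order.compl a)%O.
Proof.
move=> H; have := disjoint_lexUl (Order.compl a) H.
by rewrite joinCx lex1 => <-.
Qed.

Lemma uf_compl (u : set A) a : ultrafilter u -> u a \/ u (Order.compl a).
Proof.
move=> U; have [ua|nua] := pselect (u a); first by left.
right.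
pose G := [set c | exists2 f, u f & (Order.meet f a <= c)%O].
have [Gb|nGb] := pselect (G \bot%O).
  case: Gb => f uf; rewrite lex0 => /eqP fa.
  exact: (uf_up U uf (disj_le fa)).
exfalso; apply: nua.
have pG : proper_filter G.
  split=> //; split; first by exists \top%O; [exact: uf_top|rewrite lex1].
  split.
    move=> x y [f1 u1 h1] [f2 u2 h2]; exists (Order.meet f1 f2).
      exact: uf_meet.
    rewrite lexI; apply/andP; split.
      apply: le_trans h1; rewrite leI2 //; exact: leIl.
    apply: le_trans h2; rewrite leI2 //; exact: leIr.
  move=> x y [f uf h] xy; exists f => //; exact: le_trans xy.
have uG : u `<=` G by move=> c uc; exists c => //; exact: leIl.
have ut := uf_top U; case: U => _ /(_ G pG uG) <-.
by exists \top%O; [exact: ut | rewrite meet1x].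
Qed.

Lemma uf_notboth (u : set A) a : ultrafilter u -> u a -> u (Order.compl a) -> False.
Proof.
move=> U h1 h2; apply: (uf_bot U); rewrite -(meetxC a); exact: uf_meet.
Qed.

Lemma uf_join (u : set A) a c : ultrafilter u -> u (Order.join a c) -> u a \/ u c.
Proof.
move=> U h; have [|h1] := uf_compl a U; first by left.
have [|h2] := uf_compl c U; first by right.
exfalso; apply: (uf_notboth U h); rewrite complU; exact: uf_meet.
Qed.

Lemma uf_exists (x : A) : x <> \bot%O -> exists u : set A, ultrafilter u /\ u x.
Proof.
move=> xn0.
pose T := {F : set A | proper_filter F /\ F x}.
pose R := fun (s t : T) => `[< sval s `<=` sval t >].
have [| | | |M HM] := @Zorn T R.
- by move=> t; apply/asboolP.
- by move=> r s t /asboolP h1 /asboolP h2; apply/asboolP => z /h1 /h2.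
- move=> [s ps] [t pt] /asboolP h1 /asboolP h2.
  by apply: eq_exist; apply/seteqP; split.
- move=> C Ctot.
  pose U := [set c | (x <= c)%O \/ exists S, C S /\ sval S c].
  have Sx : forall S : T, sval S x by move=> S; exact: (proj2 (proj2_sig S)).
  have Sup : forall S : T, forall a c, sval S a -> (a <= c)%O -> sval S c.
    by move=> S a c; case: (proj1 (proj2_sig S)) => [[_ [_ H]] _]; apply: H.
  have Smeet : forall S : T, forall a c, sval S a -> sval S c -> sval S (Order.meet a c).
    by move=> S a c; case: (proj1 (proj2_sig S)) => [[_ [H _]] _]; apply: H.
  have Sbot : forall S : T, ~ sval S \bot%O by move=> S; exact: (proj2 (proj1 (proj2_sig S))).
  have pU : proper_filter U /\ U x.
    split; last by left.
    split; last first.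
      case=> [|[S [_ /Sbot //]]]; by rewrite lex0 => /eqP.
    split; first by left; rewrite lex1.
    split; last first.
      move=> a c [h|[S [CS h]]] ac; first by left; exact: le_trans ac.
      by right; exists S; split=> //; exact: Sup ac.
    move=> a c [ha|[S [CS ha]]] [hc|[S' [CS' hc]]].
    + by left; rewrite lexI ha hc.
    + right; exists S'; split=> //; apply: Smeet => //; exact: Sup (Sx S') ha.
    + right; exists S; split=> //; apply: Smeet => //; exact: Sup (Sx S) hc.
    + right; case: (Ctot _ _ CS CS') => /asboolP sub.
        by exists S'; split=> //; apply: Smeet => //; exact: sub.
      by exists S; split=> //; apply: Smeet => //; exact: sub.
  exists (exist _ U pU) => S CS; apply/asboolP => c Sc /=.
  by right; exists S.
- exists (sval M); split; last by case: M HM => ? [].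
  split; first by case: M HM => ? [].
  move=> G pG MG.
  have Gx : G x by apply: MG; case: M HM => ? [].
  have := HM (exist _ G (conj pG Gx)).
  by move=> /(_ (asboolT MG)) <-.
Qed.

Lemma phi_top : phi (\top%O : A) = setT.
Proof. by apply/seteqP; split=> u //= _; apply: uf_top (proj2_sig u). Qed.

Lemma phi_bot : phi (\bot%O : A) = set0.
Proof. by apply/seteqP; split=> u //= h; apply: uf_bot (proj2_sig u) h. Qed.

Lemma phi_meet (a c : A) : phi (Order.meet a c) = phi a `&` phi c.
Proof.
apply/seteqP; split=> u /=.
  move=> h; split; apply: uf_up (proj2_sig u) h _; [exact: leIl|exact: leIr].
by move=> [h1 h2]; apply: uf_meet (proj2_sig u) h1 h2.
Qed.

Lemma phi_join (a c : A) : phi (Order.join a c) = phi a `|` phi c.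
Proof.
apply/seteqP; split=> u /=.
  by move=> h; apply: uf_join (proj2_sig u) h.
by move=> [h|h]; apply: uf_up (proj2_sig u) h _; [exact: leUl|exact: leUr].
Qed.

Lemma phi_compl (a : A) : phi (Order.compl a) = ~` phi a.
Proof.
apply/seteqP; split=> u /=.
  by move=> h1 h2; apply: uf_notboth (proj2_sig u) h2 h1.
by move=> h; case: (uf_compl a (proj2_sig u)).
Qed.

Lemma phi_le (a c : A) : phi a `<=` phi c -> (a <= c)%O.
Proof.
move=> h.
have [e|ne] := pselect (Order.meet a (Order.compl c) = \bot%O).
  by have := disj_le e; rewrite complK.
have [u [U ua]] := uf_exists ne.
have ua' : phi a (exist _ u U) by apply: uf_up U ua (leIl _ _).
have := h _ ua' => /= uc.
by case: (uf_notboth U uc); apply: uf_up U ua (leIr _ _).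
Qed.

Lemma phi_inj (a c : A) : phi a = phi c -> a = c.
Proof. by move=> e; apply: le_anti; rewrite !phi_le // e. Qed.

End Help.

Theorem theorem3p3 (d : Order.disp_t) (A : ctbDistrLatticeType d)
  (B : set A) (box : A -> A -> A) :
  multimodal_antitone B box ->
  exists box' : set (Ul A) -> set (Ul A) -> set (Ul A),
    (forall b, B b -> box' (phi b) = boxQ box b) /\
    multimodal_antitone (phi @` B) box'.
Proof.
move=> [[B0 [B1 [BI [BU BC]]]] [_ [_ Hanti]]].
pose box' := fun (X Y : set (Ul A)) =>
  [set u | forall b, B b -> phi b = X -> boxQ box b Y u].
have E : forall b, B b -> box' (phi b) = boxQ box b.
  move=> b Bb; apply: funext => Y; apply/seteqP; split=> u /=.
    by move=> /(_ b Bb erefl).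
  by move=> h b' _ /phi_inj ->.
exists box'; split=> //.
split; [split; [|split; [|split; [|split]]]|split; [|split]].
- by exists \bot%O => //; rewrite phi_bot.
- by exists \top%O => //; rewrite phi_top.
- by move=> _ _ [x Bx <-] [y By <-]; exists (Order.meet x y); [exact: BI|rewrite phi_meet].
- by move=> _ _ [x Bx <-] [y By <-]; exists (Order.join x y); [exact: BU|rewrite phi_join].
- by move=> _ [x Bx <-]; exists (Order.compl x); [exact: BC|rewrite phi_compl].
- move=> _ [b Bb <-]; rewrite E //; apply/seteqP; split=> u //= _ v _; done.
- move=> _ Y Z [b Bb <-]; rewrite E //; apply/seteqP; split=> u /=.
    by move=> h; split=> v /h [].
  by move=> [h1 h2] v q; split; [exact: h1|exact: h2].
- move=> _ _ Y [b1 B1b <-] [b2 B2b <-].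
  have -> : Order.join (phi b1) (phi b2) = phi (Order.join b1 b2) by rewrite phi_join.
  rewrite !E //; last exact: BU.
  apply/subsetPset => u h; split=> v q; apply: h => a /= ua; apply: q => /=.
    apply: uf_up (proj2_sig u) ua _; have := Hanti b1 b2 a B1b B2b.
    by rewrite lexI => /andP[].
  apply: uf_up (proj2_sig u) ua _; have := Hanti b1 b2 a B1b B2b.
  by rewrite lexI => /andP[].
Qed.
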